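(* Let $Y=[y_{ij}]$ be an $N\times k$ array with entries in $\{-1,1\}$, let $\ell\subseteq\{1,\dots,k\}$ with $|\ell|=r>0$, and let $g\in G(k)^{\rm OD}$. Then $J_r(\ell)(g(Y))=\pm J_{r'}(\ell')(Y)$ for some $\ell'\subseteq\{1,\dots,k\}$, where $r'=|\ell'|\in\{r,r+1\}$ if $r$ is odd and $r'\in\{r,r-1\}$ if $r$ is even.
   Context: For $\ell\subseteq\{1,\dots,k\}$ with $|\ell|=r\ge1$, the $J$-characteristic is $J_r(\ell)(Y)=\sum_{i=1}^N\prod_{j\in\ell}y_{ij}$, and $J_0(\emptyset)(Y)=N$. $G(k)^{\rm OD}$ is the group of permutations of $\{-1,1\}^k$ generated by coordinate permutations, sign changes of single coordinates, and $R_i(z_1,\dots,z_k)=(z_1z_i,\dots,z_{i-1}z_i,z_i,z_{i+1}z_i,\dots,z_kz_i)$ for $i=1,\dots,k$; $g(Y)$ is obtained by applying $g$ to each row of $Y$. *)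

(* Defs.v *)
From HB Require Import structures.
From mathcomp Require Import all_boot all_order all_algebra all_fingroup.
Set Implicit Arguments. Unset Strict Implicit. Unset Printing Implicit Defensive.
Import GRing.Theory Num.Theory.

(* Points of {-1,1}^k, encoded as boolean vectors: true <-> -1, false <-> 1.
   Under this encoding the product of two signs is xor. *)
Definition pt (k : nat) := {ffun 'I_k -> bool}.

Definition sgn (b : bool) : int := if b then (-1)%R else 1%R.

Definition cperm_fun k (s : 'S_k) (z : pt k) : pt k := [ffun j => z (s j)].
Lemma cperm_inj k (s : 'S_k) : injective (cperm_fun s).
Proof.
apply: (can_inj (g := cperm_fun s^-1)) => z; apply/ffunP => j.
by rewrite !ffunE permKV.
Qed.
Definition cperm k (s : 'S_k) : {perm pt k} := perm (@cperm_inj k s).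

Definition flip_fun k (i : 'I_k) (z : pt k) : pt k :=
  [ffun j => if j == i then ~~ z j else z j].
Lemma flip_inj k (i : 'I_k) : injective (flip_fun i).
Proof.
apply: (can_inj (g := flip_fun i)) => z; apply/ffunP => j.
by rewrite !ffunE; case: (j == i) => //; rewrite negbK.
Qed.
Definition flip k (i : 'I_k) : {perm pt k} := perm (@flip_inj k i).

(* R_i(z) = (z_1 z_i, ..., z_{i-1} z_i, z_i, z_{i+1} z_i, ..., z_k z_i) *)
Definition R_fun k (i : 'I_k) (z : pt k) : pt k :=
  [ffun j => if j == i then z j else z j (+) z i].
Lemma R_inj k (i : 'I_k) : injective (R_fun i).
Proof.
apply: (can_inj (g := R_fun i)) => z; apply/ffunP => j.
rewrite !ffunE eqxx; case: eqP => // _.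
by rewrite -addbA addbb addbF.
Qed.
Definition Rgen k (i : 'I_k) : {perm pt k} := perm (@R_inj k i).

Definition GOD k : {set {perm pt k}} :=
  <<[set cperm s | s : 'S_k] :|: [set flip i | i : 'I_k]
     :|: [set Rgen i | i : 'I_k]>>%g.

Definition J N k (l : {set 'I_k}) (Y : 'M[int]_(N, k)) : int :=
  (\sum_(i < N) \prod_(j in l) Y i j)%R.

Definition row_pt N k (Y : 'M[int]_(N, k)) (i : 'I_N) : pt k :=
  [ffun j => Y i j == (-1)%R].
Definition actY N k (g : {perm pt k}) (Y : 'M[int]_(N, k)) : 'M[int]_(N, k) :=
  \matrix_(i, j) sgn (g (row_pt Y i) j).

(* Main.v *)
Require Import Defs.
From mathcomp Require Import all_boot all_order all_algebra all_fingroup.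
From mathcomp Require Import zify.
Set Implicit Arguments. Unset Strict Implicit. Unset Printing Implicit Defensive.
Import GRing.Theory Num.Theory.
Lemma uhA n : ~~ odd n.+1 -> uphalf n = uphalf n.+1.
Proof. rewrite !uphalf_half. lia. Qed.
Lemma uhB n : odd n -> uphalf n.+1 = uphalf n.
Proof. rewrite !uphalf_half. lia. Qed.
Lemma uhD a b : uphalf a = uphalf b -> odd b -> a = b \/ a = b.+1.
Proof. rewrite !uphalf_half. lia. Qed.
Lemma uhE a b : uphalf a = uphalf b -> 0 < b -> ~~ odd b -> a = b \/ a = b.-1.
Proof. rewrite !uphalf_half. lia. Qed.
Local Open Scope ring_scope.

Definition chi k (l : {set 'I_k}) (z : pt k) : int := \prod_(j in l) sgn (z j).

Lemma sgnX (a b : bool) : sgn (a (+) b) = sgn a * sgn b.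
Proof. by case: a; case: b; rewrite /sgn //= ?mulN1r ?mulr1 ?opprK ?mul1r. Qed.

Lemma sgn2 (a : bool) : sgn a * sgn a = 1.
Proof. by case: a; rewrite /sgn ?mulrNN mulr1. Qed.

Definition good k (l l' : {set 'I_k}) :=
  uphalf #|l'| = uphalf #|l|.

Definition Prop_g k (g : {perm pt k}) :=
  forall l : {set 'I_k}, (0 < #|l|)%N -> exists (l' : {set 'I_k}) (e : bool),
    good l l' /\ forall z, chi l (g z) = (-1) ^+ e * chi l' z.

Lemma good_pos k (l l' : {set 'I_k}) : (0 < #|l|)%N -> good l l' -> (0 < #|l'|)%N.
Proof. rewrite /good !uphalf_half; lia. Qed.

Lemma prop_cperm k (s : 'S_k) : Prop_g (cperm s).
Proof.
move=> l _; exists (s @: l), false; split.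
  by rewrite /good card_imset //; apply: perm_inj.
move=> z; rewrite expr0 mul1r /chi big_imset /=; last by move=> x y _ _; apply: perm_inj.
by apply: eq_bigr => j _; rewrite permE /cperm_fun ffunE.
Qed.

Lemma prop_flip k (i : 'I_k) : Prop_g (flip i).
Proof.
move=> l _; exists l, (i \in l); split; first by [].
move=> z; rewrite /chi; case: (boolP (i \in l)) => il.
  rewrite (bigD1 i) //= [in RHS](bigD1 i) //= expr1 mulrA; congr (_ * _).
    by rewrite permE /flip_fun ffunE eqxx; case: (z i); rewrite /sgn ?opprK.
  by apply: eq_bigr => j /andP [_ ji]; rewrite permE /flip_fun ffunE (negbTE ji).
rewrite expr0 mul1r; apply: eq_bigr => j jl; rewrite permE /flip_fun ffunE.
by case: eqP => // ji; rewrite -ji jl in il.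
Qed.

Lemma prop_R k (i : 'I_k) : Prop_g (Rgen i).
Proof.
move=> l lpos.
have key : forall z, chi l (Rgen i z) = chi l z * sgn (z i) ^+ #|l :\ i|.
  move=> z; rewrite /chi.
  rewrite (eq_bigr (fun j => sgn (z j) * (if j != i then sgn (z i) else 1))); last first.
    move=> j _; rewrite permE /R_fun ffunE; case: eqP => _ /=; first by rewrite mulr1.
    by rewrite sgnX.
  rewrite big_split /=; congr (_ * _).
  rewrite -big_mkcondr /= -prodr_const; apply: eq_bigl => j.
  by rewrite !inE andbC.
case: (boolP (i \in l)) => il; case: (boolP (odd #|l|)) => ol.
- exists l, false; split; first by [].
  move=> z; rewrite key expr0 mul1r.
  have : ~~ odd #|l :\ i| by move: ol; rewrite (cardsD1 i l) il.
  by move=> /negbTE h; rewrite -(odd_double_half #|l :\ i|) h add0n -mul2n exprM expr2 sgn2 expr1n mulr1.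
- exists (l :\ i), false; split.
    by rewrite /good (cardsD1 i l) il add1n in ol *; apply: uhA.
  move=> z; rewrite key expr0 mul1r.
  have hc : odd #|l :\ i| by move: ol; rewrite (cardsD1 i l) il add1n /= negbK.
  rewrite -(odd_double_half #|l :\ i|) hc add1n exprS -mul2n exprM expr2 sgn2 expr1n mulr1.
  rewrite /chi (bigD1 i il) /= mulrC mulrA.
  have -> : \prod_(j in l | j != i) sgn (z j) = \prod_(j in l :\ i) sgn (z j).
    by apply: eq_bigl => j; rewrite !inE andbC.
  by rewrite sgn2 mul1r.
- exists (i |: l), false; split.
    by rewrite /good cardsU1 il add1n; apply: uhB.
  move=> z; rewrite key expr0 mul1r.
  have -> : l :\ i = l.
    by apply/setP => j; rewrite !inE; case: eqP => // ->; rewrite (negbTE il).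
  rewrite -(odd_double_half #|l|) ol add1n exprS -mul2n exprM expr2 sgn2 expr1n mulr1.
  rewrite /chi (bigD1 i (setU11 i l)) /= mulrC.
  congr (_ * _); apply: eq_bigl => j; change ((j \in l) = (j \in i |: l) && (j != i)); rewrite !inE.
  by case: (eqVneq j i) => [->|] /=; rewrite ?(negbTE il) ?andbT ?andbF.
- exists l, false; split; first by [].
  move=> z; rewrite key expr0 mul1r.
  have -> : l :\ i = l.
    by apply/setP => j; rewrite !inE; case: eqP => // ->; rewrite (negbTE il).
  by rewrite -(odd_double_half #|l|) (negbTE ol) add0n -mul2n exprM expr2 sgn2 expr1n mulr1.
Qed.

Lemma prop_one k : Prop_g (1 : {perm pt k}).
Proof. by move=> l _; exists l, false; split => // z; rewrite perm1 expr0 mul1r. Qed.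

Lemma prop_mul k (a b : {perm pt k}) : Prop_g a -> Prop_g b -> Prop_g (a * b).
Proof.
move=> Pa Pb l lpos.
have [l1 [e1 [g1 h1]]] := Pb l lpos.
have [l2 [e2 [g2 h2]]] := Pa l1 (good_pos lpos g1).
exists l2, (e1 (+) e2); split; first by rewrite /good g2 g1.
by move=> z; rewrite permM h1 h2 signr_addb mulrA.
Qed.

Lemma prop_GOD k (g : {perm pt k}) : g \in GOD k -> Prop_g g.
Proof.
move=> /gen_prodgP [n [c hc ->]].
apply: (big_ind (@Prop_g k)); [exact: prop_one | exact: prop_mul |].
move=> i _; move: (hc i); rewrite !inE -!orbA.
case/or3P => /imsetP [x _ ->]; [exact: prop_cperm | exact: prop_flip | exact: prop_R].
Qed.

Local Close Scope ring_scope.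

Theorem lemma7 (N k : nat) (Y : 'M[int]_(N, k))
  (hY : forall i j, Y i j = 1%R \/ Y i j = (-1)%R)
  (l : {set 'I_k}) (hr : 0 < #|l|)
  (g : {perm pt k}) (hg : g \in GOD k) :
  exists (l' : {set 'I_k}) (e : bool),
    J l (actY g Y) = ((-1) ^+ e * J l' Y)%R /\
    (if odd #|l| then #|l'| = #|l| \/ #|l'| = #|l|.+1
     else #|l'| = #|l| \/ #|l'| = #|l|.-1).
Proof.
have [l' [e [gl he]]] := prop_GOD hg hr.
exists l', e; split.
  rewrite /J mulr_sumr; apply: eq_bigr => i _.
  transitivity (chi l (g (row_pt Y i))).
    by apply: eq_bigr => j _; rewrite mxE.
  rewrite he; congr (_ * _)%R.
  rewrite /chi; apply: eq_bigr => j _; rewrite /row_pt ffunE.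
  by case: (hY i j) => ->; rewrite /sgn //; case: eqP.
rewrite /good in gl; case: ifP => ho.
  exact: uhD.
by apply: uhE => //; rewrite ho.
Qed.
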